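(* Let $G=*_C G_i$ be an amalgamated free product, $n\ge1$, and $t_1,\dots,t_n,g_1,\dots,g_n\in G$. If the tuple $((t_1,g_1),\dots,(t_n,g_n))$ is tamed, then $$l(t_1^{g_1}t_2^{g_2}\cdots t_n^{g_n})\ge l(g_1)+n+l(g_n).$$
   Context: Notation $x^y=y^{-1}xy$. Every $g\in G=*_C G_i$ can be written $g=cx_1\cdots x_n$ with $c\in C$, $x_j\in G_{i_j}\setminus C$ and $i_j\neq i_{j+1}$; $n$ is determined by $g$ and called the length $l(g)$ (so $l(g)=0$ iff $g\in C$). A product $h_1\cdots h_k$ (i.e. the tuple $(h_1,\dots,h_k)$) is reduced if $l(h_1\cdots h_k)=l(h_1)+\cdots+l(h_k)$. If $h=h'h''$ with the product $h'h''$ reduced, $h'$ is a left factor and $h''$ a right factor of $h$. Set $g_0=g_{n+1}=t_0=t_{n+1}=1$. For $1\le i\le n$, $t_i$ is cancellable if at least one of: (1) $R g_i^{-1}t_i\in C$ for some right factor $R$ of $g_{i-1}$; (2) $t_ig_iL\in C$ for some left factor $L$ of $g_{i+1}^{-1}$; (3) $R\,g_i^{-1}t_ig_i\,L\in C$ for some right factor $R$ of $g_{i-1}$ and some left factor $L$ of $g_{i+1}^{-1}$. The tuple $((t_1,g_1),\dots,(t_n,g_n))$ is tamed if: (a) for each $i$, $l(t_i)=1$ and the product $g_i^{-1}t_ig_i$ (tuple $(g_i^{-1},t_i,g_i)$) is reduced; (b) for $1\le i\le n-1$, if $l(g_ig_{i+1}^{-1})=0$ then $l(t_it_{i+1})=2$;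 (c) no $t_i$ is cancellable. *)

(* Defs.v *)
From Stdlib Require Import List Arith Lia ClassicalEpsilon.
Import ListNotations.
Set Implicit Arguments.

Record Grp := {
  car :> Type;
  gmul : car -> car -> car;
  ginv : car -> car;
  gone : car;
  gmulA : forall x y z, gmul x (gmul y z) = gmul (gmul x y) z;
  gmul1 : forall x, gmul gone x = x;
  gmulV : forall x, gmul (ginv x) x = gone }.

Section AFP.
Variable G : Grp.
Variable I : Type.
Variable Gi : I -> G -> Prop.
Variable C : G -> Prop.

Local Notation "x * y" := (gmul G x y).
Local Notation e := (gone G).

Definition is_subgroup (H : G -> Prop) : Prop :=
  H e /\ (forall x y, H x -> H y -> H (x * y)) /\ (forall x, H x -> H (ginv G x)).

Definition gprod (xs : list G) : G := fold_left (fun a x => a * x) xs e.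

Definition gconj (x y : G) : G := ginv G y * x * y.

Fixpoint alternating (ws : list (I * G)) : Prop :=
  match ws with
  | [] => True
  | (i, x) :: rest =>
      Gi i x /\ ~ C x /\
      (match rest with [] => True | (j, _) :: _ => i <> j end) /\
      alternating rest
  end.

(* G = *_C G_i : G_i subgroups containing the subgroup C, G generated by the
   G_i, and (normal form theorem) no alternating product of length >= 1 is 1. *)
Definition is_amalgamated_free_product : Prop :=
  is_subgroup C /\ (forall i, is_subgroup (Gi i)) /\
  (forall i x, C x -> Gi i x) /\
  (forall g : G, exists ws : list (I * G),
      (forall w, In w ws -> Gi (fst w) (snd w)) /\ g = gprod (map snd ws)) /\
  (forall ws : list (I * G), ws <> [] -> alternating ws -> gprod (map snd ws) <> e).

Definition has_length (g : G) (n : nat) : Prop :=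
  exists (c : G) (ws : list (I * G)),
    C c /\ alternating ws /\ length ws = n /\ g = c * gprod (map snd ws).

(* l(g): the (well-defined) n of any such expression of g *)
Definition len (g : G) : nat := epsilon (inhabits 0) (has_length g).

Definition reduced (hs : list G) : Prop :=
  len (gprod hs) = fold_right (fun h s => len h + s) 0 hs.

Definition left_factor (h' h : G) : Prop :=
  exists h'', h = h' * h'' /\ reduced [h'; h''].
Definition right_factor (h'' h : G) : Prop :=
  exists h', h = h' * h'' /\ reduced [h'; h''].

(* t, g : nat -> G are indexed by 1..n; g_0 = g_{n+1} = 1 *)
Definition ext (n : nat) (f : nat -> G) (i : nat) : G :=
  if orb (i =? 0) (i =? S n) then e else f i.

Definition cancellable (n : nat) (t g : nat -> G) (i : nat) : Prop :=
  let gi := ext n g i in let ti := ext n t i in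
  (exists R, right_factor R (ext n g (i - 1)) /\ C (R * ginv G gi * ti)) \/
  (exists L, left_factor L (ginv G (ext n g (i + 1))) /\ C (ti * gi * L)) \/
  (exists R L, right_factor R (ext n g (i - 1)) /\
               left_factor L (ginv G (ext n g (i + 1))) /\
               C (R * ginv G gi * ti * gi * L)).

Definition tamed (n : nat) (t g : nat -> G) : Prop :=
  (forall i, 1 <= i <= n -> len (t i) = 1 /\ reduced [ginv G (g i); t i; g i]) /\
  (forall i, 1 <= i <= n - 1 -> len (g i * ginv G (g (i + 1))) = 0 ->
             len (t i * t (i + 1)) = 2) /\
  (forall i, 1 <= i <= n -> ~ cancellable n t g i).

Definition conj_prod (n : nat) (t g : nat -> G) : G :=
  gprod (map (fun i => gconj (t i) (g i)) (seq 1 n)).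

End AFP.

(* Main.v *)
Require Import Defs.
From Stdlib Require Import List Arith Lia Classical ClassicalEpsilon.
Import ListNotations.

Section Main.
Variable G : Grp.
Variable I : Type.
Variable Gi : I -> G -> Prop.
Variable C : G -> Prop.
Hypothesis AFP : is_amalgamated_free_product G Gi C.

Local Notation "x * y" := (gmul G x y).
Local Notation one := (gone G).
Local Notation inv := (ginv G).

Lemma mulV x : x * inv x = one.
Proof.
  rewrite <- (gmul1 G (x * inv x)).
  rewrite <- (gmulV G (inv x)) at 1.
  rewrite <- gmulA. rewrite (gmulA G (inv x)). rewrite gmulV, gmul1. apply gmulV.
Qed.

Lemma mul1r x : x * one = x.
Proof. rewrite <- (gmulV G x), gmulA, mulV. apply gmul1. Qed.

Lemma inv_uniq a b : a * b = one -> a = inv b.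
Proof.
  intro H. rewrite <- (mul1r a), <- (mulV b), gmulA, H. apply gmul1.
Qed.

Lemma inv_mul x y : inv (x * y) = inv y * inv x.
Proof.
  symmetry. apply inv_uniq. rewrite gmulA, <- (gmulA G (inv y)), gmulV, mul1r. apply gmulV.
Qed.

Lemma inv_inv x : inv (inv x) = x.
Proof. symmetry. apply inv_uniq. apply mulV. Qed.

Lemma inv_one : inv one = one.
Proof. symmetry. apply inv_uniq. apply gmul1. Qed.

Lemma canc1 a x : a * x * inv x = a.
Proof. rewrite <- gmulA, mulV. apply mul1r. Qed.
Lemma canc2 a x : a * inv x * x = a.
Proof. rewrite <- gmulA, gmulV. apply mul1r. Qed.

Ltac gs := repeat (rewrite ?inv_mul, ?inv_inv, ?inv_one, ?gmulA, ?canc1, ?canc2,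
   ?mulV, ?gmulV, ?gmul1, ?mul1r).

Definition prod (u : list (I * G)) : G := gprod G (map snd u).

Lemma fold_gen xs a : fold_left (fun a x => a * x) xs a = a * gprod G xs.
Proof.
  revert a. induction xs as [|x xs IH]; intro a; simpl.
  - unfold gprod; simpl. now rewrite mul1r.
  - unfold gprod; simpl. rewrite IH, (IH (one * x)). gs. reflexivity.
Qed.

Lemma gprod_app xs ys : gprod G (xs ++ ys) = gprod G xs * gprod G ys.
Proof. unfold gprod at 1. rewrite fold_left_app, fold_gen. reflexivity. Qed.

Lemma gprod_cons x xs : gprod G (x :: xs) = x * gprod G xs.
Proof. unfold gprod at 1. simpl. rewrite fold_gen. gs. reflexivity. Qed.

Lemma prod_nil : prod [] = one.
Proof. reflexivity. Qed.
Lemma prod_cons a u : prod (a :: u) = snd a * prod u.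
Proof. unfold prod. simpl. apply gprod_cons. Qed.
Lemma prod_app u v : prod (u ++ v) = prod u * prod v.
Proof. unfold prod. rewrite map_app. apply gprod_app. Qed.
Lemma prod_one a : prod [a] = snd a.
Proof. rewrite prod_cons, prod_nil. apply mul1r. Qed.

Definition invl (a : I * G) : I * G := (fst a, inv (snd a)).
Definition winv (u : list (I * G)) := rev (map invl u).

Lemma winv_cons a u : winv (a :: u) = winv u ++ [invl a].
Proof. reflexivity. Qed.
Lemma winv_len u : length (winv u) = length u.
Proof. unfold winv. now rewrite length_rev, length_map. Qed.
Lemma prod_winv u : prod (winv u) = inv (prod u).
Proof.
  induction u as [|a u IH].
  - unfold winv. cbn [map rev]. rewrite prod_nil. now rewrite inv_one.
  - rewrite winv_cons, prod_app, IH, prod_one, prod_cons. simpl. now rewrite inv_mul.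
Qed.

Lemma C1 : C one. Proof. destruct AFP as [[H _] _]. exact H. Qed.
Lemma Cmul x y : C x -> C y -> C (x * y). Proof. destruct AFP as [[_ [H _]] _]. apply H. Qed.
Lemma Cinv x : C x -> C (inv x). Proof. destruct AFP as [[_ [_ H]] _]. apply H. Qed.
Lemma G1 i : Gi i one. Proof. destruct AFP as [_ [H _]]. apply H. Qed.
Lemma Gmul i x y : Gi i x -> Gi i y -> Gi i (x * y). Proof. destruct AFP as [_ [H _]]. apply H. Qed.
Lemma Ginv i x : Gi i x -> Gi i (inv x). Proof. destruct AFP as [_ [H _]]. apply H. Qed.
Lemma CG i x : C x -> Gi i x. Proof. destruct AFP as [_ [_ [H _]]]. apply H. Qed.

Lemma Cinv_iff x : C (inv x) -> C x.
Proof. intro H. rewrite <- (inv_inv x). now apply Cinv. Qed.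

Definition ok (a : I * G) := Gi (fst a) (snd a) /\ ~ C (snd a).

Lemma alt_nil : alternating G Gi C []. Proof. simpl. auto. Qed.
Lemma alt_single a : alternating G Gi C [a] <-> ok a.
Proof. destruct a; simpl; unfold ok; simpl; tauto. Qed.
Lemma alt_cons2 a b r : alternating G Gi C (a :: b :: r) <->
   ok a /\ fst a <> fst b /\ alternating G Gi C (b :: r).
Proof. destruct a, b; simpl; unfold ok; simpl; tauto. Qed.
Lemma alt_head a v : alternating G Gi C (a :: v) -> ok a.
Proof. destruct v; [now rewrite alt_single | rewrite alt_cons2; tauto]. Qed.
Lemma alt_tail a v : alternating G Gi C (a :: v) -> alternating G Gi C v.
Proof. destruct a; simpl; tauto. Qed.

Lemma alt_split u a v : alternating G Gi C (u ++ a :: v) <->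
   alternating G Gi C (u ++ [a]) /\ alternating G Gi C (a :: v).
Proof.
  induction u as [|b u IH].
  - cbn [app]. split; [intro H; split; [apply alt_single; eapply alt_head; eauto | auto] | tauto].
  - destruct u as [|c u].
    + cbn [app]. rewrite !alt_cons2, alt_single. split; [|tauto].
      intro H. split; [|tauto]. split; [tauto|]. split; [tauto|]. eapply alt_head. apply H.
    + cbn [app]. cbn [app] in IH. rewrite !alt_cons2. rewrite IH. tauto.
Qed.

Lemma alt_last u a : alternating G Gi C (u ++ [a]) -> ok a.
Proof. intro H. apply alt_split in H. rewrite <- alt_single. tauto. Qed.

Lemma alt_app_l u v : alternating G Gi C (u ++ v) -> alternating G Gi C u.
Proof.
  intro H. destruct v as [|a v].
  - now rewrite app_nil_r in H.
  - apply alt_split in H. destruct H as [H _].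
    destruct u as [|b u0] using rev_ind; [apply alt_nil|].
    rewrite <- app_assoc in H. simpl in H. apply alt_split in H. tauto.
Qed.

Lemma alt_app_r u v : alternating G Gi C (u ++ v) -> alternating G Gi C v.
Proof.
  intro H. destruct v as [|a v]; [apply alt_nil|]. apply alt_split in H. tauto.
Qed.

Lemma alt_join u a b v : alternating G Gi C (u ++ [a]) -> alternating G Gi C (b :: v) ->
  fst a <> fst b -> alternating G Gi C (u ++ a :: b :: v).
Proof.
  intros H1 H2 H3. apply alt_split. split; auto. apply alt_cons2.
  split; [eapply alt_last; eauto|]. auto.
Qed.

Lemma alt_repl u a a' v : alternating G Gi C (u ++ a :: v) -> ok a' -> fst a' = fst a ->
  alternating G Gi C (u ++ a' :: v).
Proof.
  intros H Hok Hf. apply alt_split in H. destruct H as [H1 H2]. apply alt_split. split.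
  - destruct u as [|b u0] using rev_ind; [now apply alt_single|].
    rewrite <- app_assoc in *. simpl in *. apply alt_split in H1. apply alt_split.
    destruct H1 as [H1 H1']. split; auto. rewrite alt_cons2 in *. rewrite alt_single. rewrite Hf. tauto.
  - destruct v as [|c v]; [now apply alt_single|]. rewrite alt_cons2 in *. rewrite Hf. tauto.
Qed.

Lemma ok_inv a : ok a -> ok (invl a).
Proof.
  destruct a as [i x]; unfold ok, invl; simpl. intros [H1 H2]. split.
  - now apply Ginv.
  - intro H. apply H2. now apply Cinv_iff.
Qed.

Lemma alt_inv u : alternating G Gi C u -> alternating G Gi C (winv u).
Proof.
  induction u as [|a u IH]; intro H; [apply alt_nil|].
  rewrite winv_cons. destruct u as [|b u].
  - unfold winv at 1; cbn [map rev app]. apply alt_single. apply ok_inv. now apply alt_single.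
  - rewrite winv_cons in *. rewrite <- app_assoc. cbn [app]. apply alt_split. split.
    + apply IH. eapply alt_tail; eauto.
    + rewrite alt_cons2 in H. apply alt_cons2. rewrite alt_single. unfold invl; simpl.
      split; [apply ok_inv; eapply alt_head; apply H|]. split; [intuition|]. apply ok_inv. tauto.
Qed.


Lemma ok_mulC_r i x z : ok (i, x) -> C z -> ok (i, x * z).
Proof.
  unfold ok; simpl. intros [H1 H2] Hz. split; [apply Gmul; auto; now apply CG|].
  intro H. apply H2. replace x with (x * z * inv z) by (gs; reflexivity). apply Cmul; auto. now apply Cinv.
Qed.
Lemma ok_mulC_l i x z : ok (i, x) -> C z -> ok (i, z * x).
Proof.
  unfold ok; simpl. intros [H1 H2] Hz. split; [apply Gmul; auto; now apply CG|].
  intro H. apply H2. replace x with (inv z * (z * x)) by (gs; reflexivity). apply Cmul; auto. now apply Cinv.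
Qed.

Lemma absorb_r c u z : C c -> alternating G Gi C u -> C z ->
  exists c' u', C c' /\ alternating G Gi C u' /\ length u' = length u /\ c * prod u * z = c' * prod u'.
Proof.
  intros Hc Hu Hz. destruct u as [|[i x] u0] using rev_ind.
  - exists (c * z), []. split; [now apply Cmul|]. split; [apply alt_nil|]. split; [reflexivity|].
    rewrite prod_nil. gs. reflexivity.
  - exists c, (u0 ++ [(i, x * z)]). split; auto. split.
    + eapply alt_repl; eauto. apply ok_mulC_r; auto. eapply alt_last; eauto.
    + rewrite !length_app. split; [reflexivity|]. rewrite !prod_app, !prod_one. simpl. gs. reflexivity.
Qed.

Lemma nonempty_ne c u : C c -> alternating G Gi C u -> u <> [] -> c * prod u <> one.
Proof.
  intros Hc Hu Hne. destruct u as [|[i x] u']; [congruence|].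
  destruct AFP as [_ [_ [_ [_ H]]]].
  assert (Ha : alternating G Gi C ((i, c * x) :: u')).
  { apply (alt_repl [] (i,x)); auto. apply ok_mulC_l; auto. eapply alt_head; eauto. }
  specialize (H ((i, c * x) :: u') ltac:(discriminate) Ha). fold (prod ((i, c * x) :: u')) in H.
  rewrite prod_cons in *. simpl in *. intro E. apply H. rewrite <- E. gs. reflexivity.
Qed.

Lemma nf_mul_letter c u i x : C c -> alternating G Gi C u -> Gi i x ->
  exists c' u', C c' /\ alternating G Gi C u' /\ length u' <= S (length u) /\ c * prod u * x = c' * prod u'.
Proof.
  intros Hc Hu Hx. destruct (classic (C x)) as [HxC|HxC].
  - destruct (absorb_r c u x Hc Hu HxC) as (c' & u' & ? & ? & ? & ?). exists c', u'. repeat split; auto; lia.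
  - destruct u as [|[j y] u0] using rev_ind.
    + exists one, [(i, c * x)]. split; [apply C1|]. split.
      * apply alt_single. apply ok_mulC_l; auto. split; auto.
      * split; [simpl; lia|]. rewrite prod_one, prod_nil. simpl. gs. reflexivity.
    + destruct (classic (i = j)) as [Hij|Hij].
      * subst j. destruct (classic (C (y * x))) as [Hyx|Hyx].
        -- destruct (absorb_r c u0 (y * x) Hc (alt_app_l _ _ Hu) Hyx) as (c' & u' & ? & ? & ? & Heq).
           exists c', u'. split; auto. split; auto. split; [rewrite length_app; simpl; lia|].
           rewrite <- Heq, prod_app, prod_one. simpl. gs. reflexivity.
        -- exists c, (u0 ++ [(i, y * x)]). split; auto. split.
           ++ eapply alt_repl; eauto. split; auto. simpl. apply Gmul; auto. apply (alt_last _ _ Hu).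
           ++ split; [rewrite !length_app; simpl; lia|]. rewrite !prod_app, !prod_one. simpl. gs. reflexivity.
      * exists c, (u0 ++ [(j, y); (i, x)]). split; auto. split.
        -- apply alt_join; auto. apply alt_single. split; auto.
        -- split; [rewrite !length_app; simpl; lia|]. rewrite !prod_app, !prod_cons, !prod_nil. simpl. gs. reflexivity.
Qed.

Lemma nf_list ws : (forall w, In w ws -> Gi (fst w) (snd w)) ->
  exists c u, C c /\ alternating G Gi C u /\ length u <= length ws /\ prod ws = c * prod u.
Proof.
  induction ws as [|[i x] ws IH] using rev_ind; intro Hin.
  - exists one, []. split; [apply C1|]. split; [apply alt_nil|]. split; [simpl; lia|]. rewrite prod_nil; gs; reflexivity.
  - destruct IH as (c & u & Hc & Hu & Hl & He).
    { intros w Hw. apply Hin. apply in_or_app. now left. }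
    destruct (nf_mul_letter c u i x Hc Hu) as (c' & u' & ? & ? & ? & He').
    { apply (Hin (i,x)). apply in_or_app. right. now left. }
    exists c', u'. split; auto. split; auto. split; [rewrite length_app; simpl; lia|].
    rewrite prod_app, prod_one, He. simpl. exact He'.
Qed.

Lemma cancel_lemma v : forall u c, alternating G Gi C u -> alternating G Gi C v -> C c ->
  exists u1 u2 v1 v2, u = u1 ++ u2 /\ v = v1 ++ v2 /\ length u2 = length v1 /\
    C (prod u2 * c * prod v1) /\
    (u1 = [] \/ v2 = [] \/ exists u1' i x j y v2', u1 = u1' ++ [(i,x)] /\ v2 = (j,y) :: v2' /\
        (i <> j \/ (i = j /\ ~ C (x * (prod u2 * c * prod v1) * y)))).
Proof.
  induction v as [|[j y] v' IH]; intros u c Hu Hv Hc.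
  - exists u, [], [], []. rewrite app_nil_r. split; auto. split; auto. split; auto.
    split; [rewrite !prod_nil; gs; exact Hc|]. right; left; auto.
  - destruct u as [|[i x] u0] using rev_ind.
    + exists [], [], [], ((j,y)::v'). split; auto. split; auto. split; auto.
      split; [rewrite !prod_nil; gs; exact Hc|]. left; auto.
    + destruct (classic (i = j /\ C (x * c * y))) as [[Hij Hz]|Hn].
      * subst j. destruct (IH u0 (x * c * y) (alt_app_l _ _ Hu) (alt_tail _ _ Hv) Hz)
          as (u1 & u2 & v1 & v2 & E1 & E2 & El & HC & Hd).
        assert (Eq : prod (u2 ++ [(i,x)]) * c * prod ((i,y) :: v1) = prod u2 * (x * c * y) * prod v1).
        { rewrite prod_app, prod_one, prod_cons. simpl. gs. reflexivity. }
        exists u1, (u2 ++ [(i,x)]), ((i,y)::v1), v2. split; [subst; now rewrite app_assoc|].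
        split; [subst; reflexivity|]. split; [rewrite length_app; simpl; lia|].
        rewrite Eq. split; auto.
      * exists (u0 ++ [(i,x)]), [], [], ((j,y)::v'). rewrite app_nil_r. split; auto. split; auto. split; auto.
        rewrite !prod_nil. split; [gs; exact Hc|]. right; right.
        exists u0, i, x, j, y, v'. split; auto. split; auto.
        destruct (classic (i = j)); [right|left; auto]. split; auto. intro H'. apply Hn. split; auto.
        revert H'. gs. auto.
Qed.

Lemma nf_unique c1 c2 u1 u2 : C c1 -> C c2 -> alternating G Gi C u1 -> alternating G Gi C u2 ->
  c1 * prod u1 = c2 * prod u2 -> length u1 = length u2.
Proof.
  intros H1 H2 A1 A2 E.
  assert (Hc : C (inv c2 * c1)) by (apply Cmul; auto; now apply Cinv).
  destruct (cancel_lemma u1 (winv u2) _ (alt_inv _ A2) A1 Hc)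
    as (a1 & a2 & b1 & b2 & E1 & E2 & El & HC & Hd).
  assert (E0 : prod a1 * (prod a2 * (inv c2 * c1) * prod b1) * prod b2 = one).
  { assert (prod (winv u2) * (inv c2 * c1) * prod u1 = one).
    { rewrite prod_winv. transitivity (inv (c2 * prod u2) * (c1 * prod u1)); [gs; reflexivity|]. rewrite E; gs; reflexivity. }
    rewrite E1, E2, !prod_app in H. rewrite <- H. gs. reflexivity. }
  set (c' := prod a2 * (inv c2 * c1) * prod b1) in *.
  assert (Aa1 : alternating G Gi C a1) by (pose proof (alt_inv _ A2) as Hw; rewrite E1 in Hw; eapply alt_app_l; eauto).
  assert (Ab2 : alternating G Gi C b2) by (rewrite E2 in A1; eapply alt_app_r; eauto).
  destruct Hd as [Ha1|[Hb2|(a1' & i & x & j & y & b2' & Ea & Eb & Hij)]].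
  - subst a1. destruct b2 as [|bb b2'].
    + rewrite E2, app_nil_r. rewrite <- (winv_len u2), E1. simpl. lia.
    + exfalso. apply (nonempty_ne c' (bb :: b2') HC Ab2); [congruence|]. rewrite <- E0, prod_nil. gs. reflexivity.
  - subst b2. destruct (absorb_r one a1 c' C1 Aa1 HC) as (c'' & w & Hc'' & Aw & Lw & Ew).
    destruct a1 as [|aa a1'].
    + rewrite E2, app_nil_r. rewrite <- (winv_len u2), E1. simpl. lia.
    + exfalso. apply (nonempty_ne c'' w Hc'' Aw).
      * intro Hw; subst w; simpl in Lw; congruence.
      * rewrite <- Ew. rewrite <- E0 at 2. rewrite prod_nil. gs. reflexivity.
  - exfalso. subst a1 b2. destruct Hij as [Hij|[Hij Hn]].
    + apply (nonempty_ne one (a1' ++ (i,x) :: (j, c' * y) :: b2') C1).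
      * apply alt_join; auto. apply (alt_repl [] (j,y)); auto. apply ok_mulC_l; auto. eapply alt_head; eauto.
      * destruct a1'; simpl; congruence.
      * rewrite <- E0 at 2. rewrite !prod_app, !prod_cons, ?prod_nil. simpl. gs. reflexivity.
    + subst j. apply (nonempty_ne one (a1' ++ (i, x * c' * y) :: b2') C1).
      * apply (alt_repl a1' (i, y)).
        -- apply alt_split. split; [|auto]. apply (alt_repl a1' (i,x) (i,y) []); [auto| |reflexivity].
           apply (alt_head _ _ Ab2).
        -- split; auto. simpl. apply Gmul; [apply Gmul|]; [apply (alt_last _ _ Aa1)|now apply CG|apply (alt_head _ _ Ab2)].
        -- reflexivity.
      * destruct a1'; simpl; congruence.
      * rewrite <- E0 at 2. rewrite !prod_app, !prod_cons, ?prod_nil. simpl. gs. reflexivity.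
Qed.


Local Notation len := (len G Gi C).

Lemma gprod_nil : gprod G [] = one. Proof. reflexivity. Qed.

Lemma len_nf c u : C c -> alternating G Gi C u -> len (c * prod u) = length u.
Proof.
  intros Hc Hu. unfold Defs.len.
  assert (Hex : exists m, has_length G Gi C (c * prod u) m) by (exists (length u), c, u; auto).
  destruct (epsilon_spec (inhabits 0) _ Hex) as (c' & ws & Hc' & Hws & Hl & He).
  rewrite <- Hl. symmetry. apply (nf_unique c c' u ws); auto.
Qed.

Lemma len_nf_r c u d : C c -> alternating G Gi C u -> C d -> len (c * prod u * d) = length u.
Proof.
  intros Hc Hu Hd. destruct (absorb_r c u d Hc Hu Hd) as (c' & u' & ? & ? & Hl & E).
  rewrite E, len_nf; auto.
Qed.

Lemma len_ex g : exists c u, C c /\ alternating G Gi C u /\ g = c * prod u.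
Proof.
  destruct AFP as [_ [_ [_ [Hgen _]]]]. destruct (Hgen g) as (ws & Hin & E).
  destruct (nf_list ws Hin) as (c & u & ? & ? & ? & E'). exists c, u. split; auto. split; auto.
  rewrite E. exact E'.
Qed.

Lemma len_le ws : (forall w, In w ws -> Gi (fst w) (snd w)) -> len (prod ws) <= length ws.
Proof.
  intro Hin. destruct (nf_list ws Hin) as (c & u & ? & ? & ? & E'). rewrite E', len_nf; auto.
Qed.

Lemma len_inv g : len (inv g) = len g.
Proof.
  destruct (len_ex g) as (c & u & Hc & Hu & E). subst g.
  replace (inv (c * prod u)) with (one * prod (winv u) * inv c).
  - rewrite len_nf_r, len_nf, winv_len; auto; [apply C1|apply alt_inv; auto|apply Cinv; auto].
  - rewrite prod_winv. gs. reflexivity.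
Qed.

Lemma len0 g : len g = 0 -> C g.
Proof.
  destruct (len_ex g) as (c & u & Hc & Hu & E). subst g. rewrite len_nf; auto.
  intro H. destruct u; [|simpl in H; lia]. rewrite prod_nil, mul1r. exact Hc.
Qed.

Lemma lenC g : C g -> len g = 0.
Proof.
  intro H. replace g with (g * prod []) by (rewrite prod_nil; apply mul1r). rewrite len_nf; auto. apply alt_nil.
Qed.

Lemma len1 g : len g = 1 -> exists j, Gi j g /\ ~ C g.
Proof.
  destruct (len_ex g) as (c & u & Hc & Hu & E). subst g. rewrite len_nf; auto.
  intro H. destruct u as [|[j x] [|? ?]]; simpl in H; try lia.
  apply alt_single in Hu. destruct Hu as [H1 H2]; simpl in *. exists j. rewrite prod_one. simpl. split.
  - apply Gmul; auto. now apply CG.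
  - intro H'. apply H2. replace x with (inv c * (c * x)) by (gs; reflexivity). apply Cmul; auto. now apply Cinv.
Qed.

Lemma len_single j x : Gi j x -> len x <= 1.
Proof.
  intro H. replace x with (prod [(j,x)]) by (rewrite prod_one; reflexivity).
  apply len_le. intros w [<-|[]]. exact H.
Qed.

Lemma alt_in u w : alternating G Gi C u -> In w u -> ok w.
Proof.
  induction u as [|a u IH]; intros Hu Hw; [destruct Hw|]. destruct Hw as [<-|Hw].
  - eapply alt_head; eauto.
  - apply IH; auto. eapply alt_tail; eauto.
Qed.

Lemma gprod3 a b c : gprod G [a; b; c] = a * b * c.
Proof. rewrite !gprod_cons, gprod_nil. gs. reflexivity. Qed.
Lemma gprod2 a b : gprod G [a; b] = a * b.
Proof. rewrite !gprod_cons, gprod_nil. gs. reflexivity. Qed.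

Lemma first_letter t j c i x Z : Gi j t -> len t = 1 -> C c -> alternating G Gi C ((i,x)::Z) ->
  reduced G Gi C [inv (c * prod ((i,x)::Z)); t; c * prod ((i,x)::Z)] -> i <> j.
Proof.
  intros Ht Hl Hc HZ Hr Hij. subst j. unfold reduced in Hr. rewrite gprod3 in Hr. simpl in Hr.
  rewrite len_inv, Hl, len_nf in Hr; auto.
  assert (Hle : len (prod (winv Z ++ (i, inv x * inv c * t * c * x) :: Z)) <= length (winv Z ++ (i, inv x * inv c * t * c * x) :: Z)).
  { apply len_le. intros w Hw. apply in_app_or in Hw. destruct Hw as [Hw|[<-|Hw]].
    - apply (alt_in (winv Z)); auto. apply alt_inv. eapply alt_tail; eauto.
    - simpl. apply alt_head in HZ. destruct HZ as [HZ _]; simpl in HZ.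
      repeat apply Gmul; auto; try (apply Ginv; auto); try (apply CG; auto); apply Cinv; auto.
    - apply (alt_in Z); auto. eapply alt_tail; eauto. }
  replace (prod (winv Z ++ (i, inv x * inv c * t * c * x) :: Z)) with
     (inv (c * prod ((i, x) :: Z)) * t * (c * prod ((i, x) :: Z))) in Hle.
  - rewrite Hr, length_app, winv_len in Hle. simpl in Hle. lia.
  - rewrite prod_app, prod_cons, prod_cons, prod_winv. simpl. gs. reflexivity.
Qed.


Definition ends_not (L : list (I * G)) i := forall L0 l, L = L0 ++ [l] -> fst l <> i.
Definition hd_not (W : list (I * G)) i := forall a W', W = a :: W' -> fst a <> i.

Lemma alt_glue L a W : alternating G Gi C L -> ends_not L (fst a) -> ok a ->
  alternating G Gi C W -> hd_not W (fst a) -> alternating G Gi C (L ++ a :: W).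
Proof.
  intros HL He Ha HW Hh. apply alt_split. split.
  - destruct L as [|b L0] using rev_ind; [now apply alt_single|].
    rewrite <- app_assoc. apply alt_join; auto. apply alt_single; auto. intro E. apply (He L0 b); auto.
  - destruct W as [|b W']; [now apply alt_single|]. apply alt_cons2. split; auto. split; auto.
    intro E. apply (Hh b W'); auto.
Qed.

Lemma ends_not_app A B i : B <> [] -> ends_not B i -> ends_not (A ++ B) i.
Proof.
  intros Hne H L0 l E. destruct B as [|b B0] using rev_ind; [congruence|].
  rewrite app_assoc in E. apply app_inj_tail in E. destruct E as [_ <-]. apply (H B0 b); auto.
Qed.

Lemma ends_not_sfx V1 V2 i : V2 <> [] -> ends_not (V1 ++ V2) i -> ends_not V2 i.
Proof. intros Hne H L0 l E. apply (H (V1 ++ L0) l). subst. now rewrite app_assoc. Qed.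

Lemma ends_not_fst L L' i : map fst L = map fst L' -> ends_not L i -> ends_not L' i.
Proof.
  intros Hm H L0 l E. subst L'. rewrite map_app in Hm. simpl in Hm.
  destruct L as [|b L1] using rev_ind.
  - simpl in Hm. destruct (map fst L0); simpl in Hm; discriminate.
  - rewrite map_app in Hm. simpl in Hm. apply app_inj_tail in Hm. destruct Hm as [_ Hm].
    rewrite <- Hm. apply (H L1 b); auto.
Qed.

Lemma ends_not_single a i : fst a <> i -> ends_not [a] i.
Proof.
  intros H L0 l E. destruct L0 as [|? [|? ?]]; simpl in E; inversion E; subst; auto.
Qed.

Lemma ends_not_winv W i : hd_not W i -> ends_not (winv W) i.
Proof.
  intros H L0 l E. destruct W as [|a W']; [unfold winv in E; simpl in E; destruct L0; simpl in E; discriminate|].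
  rewrite winv_cons in E. apply app_inj_tail in E. destruct E as [_ <-]. simpl. apply (H a W'); auto.
Qed.

Lemma hd_from_reduced t j c Z : Gi j t -> len t = 1 -> C c -> alternating G Gi C Z ->
  reduced G Gi C [inv (c * prod Z); t; c * prod Z] -> hd_not Z j.
Proof.
  intros Ht Hl Hc HZ Hr [i x] W' E. subst Z. simpl. eapply first_letter; eauto.
Qed.

Lemma conj_prod_S k t g : conj_prod G (S k) t g = conj_prod G k t g * gconj G (t (S k)) (g (S k)).
Proof.
  unfold conj_prod. rewrite seq_S, map_app, gprod_app. simpl. rewrite gprod_cons, gprod_nil, mul1r. reflexivity.
Qed.

Definition Inv n (t g : nat -> G) k := exists cQ Q j yv Z cz,
  C cQ /\ C cz /\ alternating G Gi C (Q ++ (j,yv) :: Z) /\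
  conj_prod G k t g = cQ * prod (Q ++ (j,yv) :: Z) /\
  g k = cz * prod Z /\ Gi j (t k) /\
  len (g 1) + k <= length Q + 1 /\
  ((exists r, C r /\ yv * inv cz = r * t k) \/
   (exists R, right_factor G Gi C R (ext G n g (k-1)) /\ yv * inv cz = R * inv (g k) * t k)).

Lemma Inv_base n t g : 1 <= n -> tamed G Gi C n t g -> Inv n t g 1.
Proof.
  intros Hn [T1 _]. destruct (T1 1 ltac:(lia)) as [Hl Hr].
  destruct (len1 _ Hl) as (j & Hj & HjC).
  destruct (len_ex (g 1)) as (c & Z & Hc & HZ & Eg).
  rewrite Eg in Hr. pose proof (hd_from_reduced _ _ _ _ Hj Hl Hc HZ Hr) as Hh.
  exists one, (winv Z), j, (inv c * t 1 * c), Z, c.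
  split; [apply C1|]. split; auto. split.
  - apply alt_glue; auto.
    + apply alt_inv; auto.
    + apply ends_not_winv; auto.
    + split; simpl.
      * apply Gmul; [apply Gmul|]; auto; apply CG; auto. apply Cinv; auto.
      * intro H. apply HjC. replace (t 1) with (c * (inv c * t 1 * c) * inv c) by (gs; reflexivity).
        apply Cmul; [apply Cmul|]; auto. apply Cinv; auto.
  - split.
    + change 1 with (S 0). rewrite conj_prod_S. replace (conj_prod G 0 t g) with one by reflexivity.
      unfold gconj. rewrite Eg, prod_app, prod_cons, prod_winv. simpl. gs. reflexivity.
    + split; auto. split; auto. split.
      * rewrite Eg, len_nf, winv_len; auto. 
      * left. exists (inv c). split; [apply Cinv; auto|]. gs. reflexivity.
Qed.


Lemma alt_ends L a W : alternating G Gi C (L ++ a :: W) -> ends_not L (fst a).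
Proof.
  intros H L0 l E. subst L. rewrite <- app_assoc in H. cbn [app] in H.
  apply alt_split in H. destruct H as [_ H]. apply alt_cons2 in H. intuition.
Qed.

Lemma alt_hd L a W : alternating G Gi C (L ++ a :: W) -> hd_not W (fst a).
Proof.
  intros H b W' E. subst W. apply alt_split in H. destruct H as [_ H]. apply alt_cons2 in H. intuition.
Qed.

Lemma ok_of L a W : alternating G Gi C (L ++ a :: W) -> ok a.
Proof. intro H. apply alt_split in H. destruct H as [_ H]. eapply alt_head; eauto. Qed.

Lemma ok_conj j x c : ok (j, x) -> C c -> ok (j, inv c * x * c).
Proof. intros H Hc. apply ok_mulC_r; auto. apply ok_mulC_l; auto. now apply Cinv. Qed.

Lemma ext_in n f i : 1 <= i <= n -> ext G n f i = f i.
Proof.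
  intro H. unfold ext. destruct (i =? 0) eqn:E1; [apply Nat.eqb_eq in E1; lia|].
  destruct (i =? S n) eqn:E2; [apply Nat.eqb_eq in E2; lia|]. reflexivity.
Qed.

Lemma Inv_intro n t g k cQ Q' y' jt W cw : C cQ -> C cw -> alternating G Gi C Q' -> ends_not Q' jt ->
  ok (jt, y') -> alternating G Gi C W -> hd_not W jt ->
  conj_prod G k t g = cQ * prod Q' * y' * prod W -> g k = cw * prod W -> Gi jt (t k) ->
  len (g 1) + k <= length Q' + 1 ->
  ((exists r, C r /\ y' * inv cw = r * t k) \/
   (exists R, right_factor G Gi C R (ext G n g (k-1)) /\ y' * inv cw = R * inv (g k) * t k)) ->
  Inv n t g k.
Proof.
  intros. exists cQ, Q', jt, y', W, cw. split; auto. split; auto. split.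
  - apply alt_glue; auto.
  - split; [|split; auto]. rewrite H6, prod_app, prod_cons. simpl. gs. reflexivity.
Qed.


Lemma Inv_step n t g k : 1 <= k -> S k <= n -> tamed G Gi C n t g -> Inv n t g k -> Inv n t g (S k).
Proof.
  intros Hk Hkn [T1 [T2 T3]] (cQ & Q & j & yv & Z & cz & HcQ & Hcz & HA & EP & Eg & Hj & HL & Hw).
  destruct (T1 (S k) ltac:(lia)) as [Hl Hr].
  destruct (len1 _ Hl) as (jt & Hjt & HtC).
  destruct (len_ex (g (S k))) as (cw & W & Hcw & HW & Egw).
  rewrite Egw in Hr. pose proof (hd_from_reduced _ _ _ _ Hjt Hl Hcw HW Hr) as Hh.
  set (tt := t (S k)) in *.
  assert (HZ : alternating G Gi C Z) by (apply alt_app_r in HA; eapply alt_tail; eauto).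
  destruct (cancel_lemma (winv W) Z one HZ (alt_inv W HW) C1) as (Z1 & Z2 & V1 & V2 & EZ & EV & El & Hc' & Hd).
  set (c' := prod Z2 * one * prod V1) in *.
  assert (EW : inv (prod W) = prod V1 * prod V2) by (rewrite <- prod_winv, EV, prod_app; reflexivity).
  assert (EZ' : prod Z = prod Z1 * c' * prod V2 * prod W).
  { rewrite EZ, prod_app. unfold c'. gs.
    assert (forall a, a * prod V1 * prod V2 = a * inv (prod W)) as E' by (intro a; rewrite EW; gs; reflexivity).
    rewrite E'. gs. reflexivity. }
  assert (EP1 : conj_prod G (S k) t g = cQ * prod Q * yv * prod Z1 * c' * prod V2 * (inv cw * tt * cw) * prod W).
  { rewrite conj_prod_S, EP, Egw. unfold gconj. rewrite prod_app, prod_cons. simpl. rewrite EZ'. fold tt. gs. reflexivity. }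
  assert (AV : alternating G Gi C (V1 ++ V2)) by (rewrite <- EV; apply alt_inv; auto).
  assert (AV2 : alternating G Gi C V2) by (eapply alt_app_r; eauto).
  assert (EnV2 : V2 <> [] -> ends_not V2 jt).
  { intro Hne. apply (ends_not_sfx V1); auto. rewrite <- EV. apply ends_not_winv; auto. }
  assert (Hokt : ok (jt, tt)) by (split; auto).
  assert (Hy' : ok (jt, inv cw * tt * cw)) by (apply ok_conj; auto).
  assert (Hdisj : (exists r, C r /\ (inv cw * tt * cw) * inv cw = r * t (S k))).
  { exists (inv cw). split; [apply Cinv; auto|]. fold tt. gs. reflexivity. }
  assert (Hlen : len (g (S k)) = length W) by (rewrite Egw; apply len_nf; auto).
  assert (Hlenk : len (g k) = length Z) by (rewrite Eg; apply len_nf; auto).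
  destruct (classic (Z1 = [] /\ V2 = [])) as [[HZ1 HV2]|HnA].
  - subst Z1 V2.
    assert (Hjj : j <> jt).
    { intro E; subst jt.
      assert (H2 : len (t k * t (k + 1)) = 2).
      { apply T2; [lia|]. replace (k + 1) with (S k) by lia. apply lenC.
        rewrite Eg, Egw, EZ', !prod_nil. gs. apply Cmul; [apply Cmul|]; auto. apply Cinv; auto. }
      replace (k + 1) with (S k) in H2 by lia.
      assert (H1 : len (t k * t (S k)) <= 1) by (apply (len_single j); apply Gmul; auto).
      lia. }
    apply (Inv_intro n t g (S k) cQ (Q ++ [(j, yv * c')]) (inv cw * tt * cw) jt W cw); auto.
    + apply (alt_repl Q (j, yv) (j, yv * c') []); auto.
      * apply alt_split in HA. tauto.
      * apply ok_mulC_r; auto. eapply ok_of; eauto.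
    + apply ends_not_app; [congruence|]. apply ends_not_single. simpl. auto.
    + rewrite EP1, prod_app, prod_one, !prod_nil. simpl. gs. reflexivity.
    + rewrite length_app. simpl. lia.
  - destruct Hd as [HZ1|[HV2|(Z1' & ix & x & jf & fv & V2' & HZ1 & HV2 & Hd)]].
    + subst Z1. destruct V2 as [|[jf fv] V2']; [tauto|].
      simpl in EZ. subst Z.
      assert (HokY : ok (j, yv)) by (eapply ok_of; eauto).
      destruct (classic (j = jf)) as [Ejf|Hjf].
      * subst jf. set (m := yv * c' * fv).
        destruct (classic (C m)) as [Hm|Hm].
        -- exfalso. apply (T3 k ltac:(lia)). unfold cancellable. cbv zeta.
           rewrite (ext_in n g k), (ext_in n t k) by lia. rewrite (ext_in n g (k + 1)) by lia.
           replace (k + 1) with (S k) by lia.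
           assert (HeqL : inv (g (S k)) = prod (V1 ++ [(j, fv)]) * (prod V2' * inv cw)).
           { rewrite Egw, inv_mul, EW, prod_app, prod_cons, prod_one. simpl. gs. reflexivity. }
           assert (HLf : left_factor G Gi C (prod (V1 ++ [(j, fv)])) (inv (g (S k)))).
           { exists (prod V2' * inv cw). split; auto. unfold reduced. rewrite gprod2. cbn [fold_right].
             rewrite <- HeqL, len_inv, Hlen.
             replace (prod (V1 ++ [(j, fv)])) with (one * prod (V1 ++ [(j, fv)])) by (gs; reflexivity).
             replace (prod V2' * inv cw) with (one * prod V2' * inv cw) by (gs; reflexivity).
             rewrite len_nf, len_nf_r; auto; try apply C1.
             - rewrite <- (winv_len W), EV, !length_app. simpl. lia.
             - eapply alt_tail; eauto.
             - apply Cinv; auto.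
             - apply (alt_app_l _ V2'). rewrite <- app_assoc. exact AV. }
           destruct Hw as [(r & Hr0 & Hr')|(R & HR & HR')].
           ++ right; left. exists (prod (V1 ++ [(j, fv)])). split; auto.
              replace (t k) with (inv r * (yv * inv cz)) by (rewrite Hr'; gs; reflexivity).
              replace (inv r * (yv * inv cz) * g k * prod (V1 ++ [(j, fv)])) with (inv r * m).
              ** apply Cmul; auto. apply Cinv; auto.
              ** unfold m, c'. rewrite Eg, prod_app, prod_one. simpl. gs. reflexivity.
           ++ right; right. exists R, (prod (V1 ++ [(j, fv)])). split; auto. split; auto.
              rewrite <- HR'.
              replace (yv * inv cz * g k * prod (V1 ++ [(j, fv)])) with m; auto.
              unfold m, c'. rewrite Eg, prod_app, prod_one. simpl. gs. reflexivity.
        -- apply (Inv_intro n t g (S k) cQ (Q ++ (j, m) :: V2') (inv cw * tt * cw) jt W cw); auto.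
           ++ apply alt_glue.
              ** eapply alt_app_l; eauto.
              ** apply (alt_ends _ _ _ HA).
              ** split; auto. simpl. unfold m. apply Gmul; [apply Gmul|].
                 --- apply HokY.
                 --- apply CG; auto.
                 --- apply (alt_head _ _ AV2).
              ** eapply alt_tail; eauto.
              ** apply (alt_hd [] (j, fv) V2'). exact AV2.
           ++ apply ends_not_app; [congruence|]. apply (ends_not_fst ((j, fv) :: V2')); [reflexivity|].
              apply EnV2. congruence.
           ++ rewrite EP1, prod_app, !prod_cons, !prod_nil. simpl. unfold m. gs. reflexivity.
           ++ rewrite length_app. simpl. lia.
      * apply (Inv_intro n t g (S k) cQ (Q ++ (j, yv * c') :: (jf, fv) :: V2') (inv cw * tt * cw) jt W cw); auto.
        -- apply alt_glue.
           ++ eapply alt_app_l; eauto.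
           ++ apply (alt_ends _ _ _ HA).
           ++ apply ok_mulC_r; auto.
           ++ auto.
           ++ intros a W' E. inversion E. simpl. auto.
        -- apply ends_not_app; [congruence|].
           change ((j, yv * c') :: (jf, fv) :: V2') with ([(j, yv * c')] ++ (jf, fv) :: V2').
           apply ends_not_app; [congruence|]. apply EnV2. congruence.
        -- rewrite EP1, prod_app, !prod_cons, !prod_nil. simpl. gs. reflexivity.
        -- rewrite length_app. simpl. lia.
    + subst V2. destruct Z1 as [|[ix x] Z1'] using rev_ind; [tauto|]. clear IHZ1'.
      subst Z.
      assert (HAP : alternating G Gi C ((Q ++ (j, yv) :: Z1') ++ (ix, x) :: Z2)).
      { replace ((Q ++ (j, yv) :: Z1') ++ (ix, x) :: Z2) with (Q ++ (j, yv) :: (Z1' ++ [(ix, x)]) ++ Z2); auto.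
        rewrite <- !app_assoc. reflexivity. }
      assert (HAP2 : alternating G Gi C ((Q ++ (j, yv) :: Z1') ++ [(ix, x)])) by (apply alt_split in HAP; tauto).
      assert (Hokx : ok (ix, x)) by (eapply ok_of; eauto).
      destruct (classic (ix = jt)) as [Eix|Hix].
      * subst ix. set (R := prod ((jt, x) :: Z2)). set (m := x * c' * inv cw * tt).
        assert (HZa : alternating G Gi C (Z1' ++ (jt, x) :: Z2)) by (rewrite <- app_assoc in HZ; exact HZ).
        assert (HgkR : g k = cz * prod Z1' * R).
        { rewrite Eg. unfold R. rewrite !prod_app, !prod_cons, prod_nil. simpl. gs. reflexivity. }
        assert (HRf : right_factor G Gi C R (ext G n g (S k - 1))).
        { replace (S k - 1) with k by lia. rewrite ext_in by lia. exists (cz * prod Z1'). split; auto.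
          unfold reduced. rewrite gprod2. cbn [fold_right]. rewrite <- HgkR, Hlenk.
          unfold R. replace (prod ((jt, x) :: Z2)) with (one * prod ((jt, x) :: Z2)) by (gs; reflexivity).
          rewrite !len_nf; auto; try apply C1.
          - rewrite !length_app. simpl. lia.
          - eapply alt_app_r; eauto.
          - eapply alt_app_l; eauto. }
        assert (HRm : R * inv (g (S k)) * tt = m).
        { rewrite Egw. unfold m, c', R. rewrite inv_mul, EW, prod_nil, prod_cons. simpl. gs. reflexivity. }
        destruct (classic (C m)) as [Hm|Hm].
        -- exfalso. apply (T3 (S k) ltac:(lia)). unfold cancellable. cbv zeta. left. exists R.
           split; auto. rewrite (ext_in n g (S k)), (ext_in n t (S k)) by lia. fold tt. rewrite HRm. exact Hm.
        -- apply (Inv_intro n t g (S k) cQ (Q ++ (j, yv) :: Z1') (m * cw) jt W cw); auto.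
           ++ eapply alt_app_l; eauto.
           ++ apply (alt_ends _ _ _ HAP).
           ++ split; simpl.
              ** unfold m. assert (Gi jt x) by apply Hokx. assert (Gi jt c') by (apply CG; exact Hc').
                 assert (Gi jt (inv cw)) by (apply CG; apply Cinv; auto).
                 apply (Gmul jt (x * c' * inv cw * tt) cw); [|apply CG; auto].
                 apply (Gmul jt (x * c' * inv cw) tt); auto. apply (Gmul jt (x * c') (inv cw)); auto.
                 apply (Gmul jt x c'); auto.
              ** intro H. apply Hm. replace m with (m * cw * inv cw) by (gs; reflexivity).
                 apply Cmul; auto. apply Cinv; auto.
           ++ rewrite EP1, !prod_app, !prod_cons, !prod_nil. simpl. unfold m. gs. reflexivity.
           ++ rewrite length_app. simpl. lia.
           ++ right. exists R. split; auto. fold tt. rewrite HRm. gs. reflexivity.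
      * apply (Inv_intro n t g (S k) cQ ((Q ++ (j, yv) :: Z1') ++ [(ix, x * c')]) (inv cw * tt * cw) jt W cw); auto.
        -- apply (alt_repl _ (ix, x) (ix, x * c') []); auto. apply ok_mulC_r; auto.
        -- apply ends_not_app; [congruence|]. apply ends_not_single. simpl. auto.
        -- rewrite EP1, !prod_app, !prod_cons, !prod_nil. simpl. gs. reflexivity.
        -- rewrite !length_app. simpl. lia.
    + subst Z1 V2.
      subst Z.
      assert (HAP : alternating G Gi C ((Q ++ (j, yv) :: Z1') ++ (ix, x) :: Z2)).
      { replace ((Q ++ (j, yv) :: Z1') ++ (ix, x) :: Z2) with (Q ++ (j, yv) :: (Z1' ++ [(ix, x)]) ++ Z2); auto.
        rewrite <- !app_assoc. reflexivity. }
      assert (HAP2 : alternating G Gi C ((Q ++ (j, yv) :: Z1') ++ [(ix, x)])) by (apply alt_split in HAP; tauto).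
      assert (Hokx : ok (ix, x)) by (eapply ok_of; eauto).
      destruct Hd as [Hd|[Ed Hd]].
      * apply (Inv_intro n t g (S k) cQ ((Q ++ (j, yv) :: Z1') ++ (ix, x * c') :: (jf, fv) :: V2') (inv cw * tt * cw) jt W cw); auto.
        -- apply alt_glue.
           ++ eapply alt_app_l; eauto.
           ++ apply (alt_ends _ _ _ HAP).
           ++ apply ok_mulC_r; auto.
           ++ auto.
           ++ intros a W' E. inversion E. simpl. auto.
        -- apply ends_not_app; [congruence|].
           change ((ix, x * c') :: (jf, fv) :: V2') with ([(ix, x * c')] ++ (jf, fv) :: V2').
           apply ends_not_app; [congruence|]. apply EnV2. congruence.
        -- rewrite EP1, !prod_app, !prod_cons, !prod_nil. simpl. gs. reflexivity.
        -- rewrite !length_app. simpl. lia.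
      * subst jf.
        apply (Inv_intro n t g (S k) cQ ((Q ++ (j, yv) :: Z1') ++ (ix, x * c' * fv) :: V2') (inv cw * tt * cw) jt W cw); auto.
        -- apply alt_glue.
           ++ eapply alt_app_l; eauto.
           ++ apply (alt_ends _ _ _ HAP).
           ++ split; auto. simpl. assert (Gi ix x) by apply Hokx. assert (Gi ix c') by (apply CG; exact Hc').
              assert (Gi ix fv) by apply (alt_head _ _ AV2).
              apply (Gmul ix (x * c') fv); auto. apply (Gmul ix x c'); auto.
           ++ eapply alt_tail; eauto.
           ++ apply (alt_hd [] (ix, fv) V2'). exact AV2.
        -- apply ends_not_app; [congruence|]. apply (ends_not_fst ((ix, fv) :: V2')); [reflexivity|].
           apply EnV2. congruence.
        -- rewrite EP1, !prod_app, !prod_cons, !prod_nil. simpl. gs. reflexivity.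
        -- rewrite !length_app. simpl. lia.
Qed.

End Main.

Theorem mainTheorem18 (G : Grp) (I : Type) (Gi : I -> G -> Prop) (C : G -> Prop)
  (n : nat) (t g : nat -> G) :
  is_amalgamated_free_product G Gi C ->
  1 <= n ->
  tamed G Gi C n t g ->
  len G Gi C (conj_prod G n t g) >= len G Gi C (g 1) + n + len G Gi C (g n).
Proof.
  intros AFP Hn Ht.
  assert (Hall : forall k, 1 <= k <= n -> Inv G I Gi C n t g k).
  { induction k as [|k IH]; intro Hk; [lia|].
    destruct (Nat.eq_dec k 0) as [->|Hk0].
    - apply Inv_base; auto.
    - apply Inv_step; auto; try lia. apply IH. lia. }
  destruct (Hall n ltac:(lia)) as (cQ & Q & j & yv & Z & cz & HcQ & Hcz & HA & EP & Eg & Hj & HL & Hw).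
  rewrite EP, Eg, !len_nf; auto.
  - rewrite length_app. simpl. lia.
  - eapply alt_tail. eapply alt_app_r; eauto.
Qed.
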